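(* Let $(A,Q_0,\unlhd)$ be a left standardly stratified algebra and let $e\in A$ be an idempotent supported in $Q_0'$. If the $A$-module $A/AeA$ has a $\Delta$-filtration and the $A$-module $D(A/AeA)$ has a $\bar\nabla$-filtration, then $Q_0'$ is a coideal of the essential order $(Q_0,\unlhd_{\mathrm{ess}})$ associated to $(A,Q_0,\unlhd)$.
   Context: All algebras finite-dimensional over a field $\Bbbk$, modules finite-dimensional left modules, $D=\mathrm{Hom}_\Bbbk(-,\Bbbk)$. Simples labelled by a finite poset $(Q_0,\unlhd)$: $L_i$, projective cover $P_i$, injective hull $I_i$, multiplicity $[X:L_i]$. Standard $\Delta_i$: largest quotient of $P_i$ with composition factors $L_j$, $j\unlhd i$; costandard $\nabla_i$: largest submodule of $I_i$ with composition factors $L_j$, $j\unlhd i$; proper costandard $\bar\nabla_i$: largest submodule $X$ of $\nabla_i$ with $[X:L_i]=1$. $\Delta$-/$\bar\nabla$-filtration: filtration with subquotients standard/proper costandard modules. $A$ is left standardly stratified if each kernel of $P_i\to\Delta_i$ is filtered by $\Delta_j$, $j\rhd i$. Support of $e$: $\{i:eL_i\ne0\}$. The essential order $\unlhd_{\mathrm{ess}}$ is the smallest partial order on $Q_0$ with $j\unlhd_{\mathrm{ess}}i$ whenever $[\Delta_i:L_j]\ne0$ or $[\bar\nabla_i:L_j]\ne0$. A coideal of $(Q_0,\unlhd_{\mathrm{ess}})$ is a subset $S$ with $i\unlhd_{\mathrm{ess}}j$, $i\in S$ $\Rightarrow$ $j\in S$. *)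

(* Defs.v *)
(* Finite-dimensional algebras are MathComp [falgType F]
   (finite-dimensional unital F-algebras); finite-dimensional left modules are
   given concretely by matrices acting on row vectors. *)
From HB Require Import structures.
From mathcomp Require Import all_boot all_order all_algebra all_field.
From Stdlib Require Import Relations.

Set Implicit Arguments.
Unset Strict Implicit.
Unset Printing Implicit Defensive.

Import GRing.Theory.
Local Open Scope ring_scope.

Section Modules.
Variables (F : fieldType) (A : falgType F).

(* A (finite-dimensional) left A-module: the space 'rV[F]_ldim, where
   a . v := v *m lact a.  Left-module axioms are the predicate [lmodP]. *)
Record lmod := LMod { ldim : nat; lact : A -> 'M[F]_ldim }.

Definition lmodP (M : lmod) : Prop :=
  [/\ forall (k : F) (a b : A), lact M (k *: a + b) = k *: lact M a + lact M b,
      lact M 1 = 1%:M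
    & forall a b : A, lact M (a * b) = lact M b *m lact M a].

(* submodules of M, represented by (square) matrices, i.e. their row spaces *)
Definition submod (M : lmod) (U : 'M[F]_(ldim M)) : Prop :=
  forall a : A, (U *m lact M a <= U)%MS.

Definition mhom (M N : lmod) (f : 'M[F]_(ldim M, ldim N)) : Prop :=
  forall a : A, lact M a *m f = f *m lact N a.

(* the subquotient V/U of M is isomorphic to the subquotient V'/U' of N *)
Definition sq_iso (M : lmod) (U V : 'M[F]_(ldim M))
                  (N : lmod) (U' V' : 'M[F]_(ldim N)) : Prop :=
  exists f : 'M[F]_(ldim M, ldim N),
    [/\ (V *m f <= V')%MS, (U *m f <= U')%MS,
        forall v : 'rV[F]_(ldim M), (v <= V)%MS -> (v *m f <= U')%MS -> (v <= U)%MS,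
        (V' <= V *m f + U')%MS
      & forall (a : A) (v : 'rV[F]_(ldim M)), (v <= V)%MS ->
          (v *m lact M a *m f - v *m f *m lact N a <= U')%MS].

Arguments sq_iso M U V N U' V' : clear implicits.

Definition miso (M N : lmod) : Prop := sq_iso M 0 1%:M N 0 1%:M.

Definition simple_sq (M : lmod) (U V : 'M[F]_(ldim M)) : Prop :=
  [/\ submod U, submod V, (U < V)%MS &
      forall X, submod X -> (U <= X)%MS -> (X <= V)%MS -> (X == U)%MS \/ (X == V)%MS].

Arguments simple_sq M U V : clear implicits.

Definition simple_mod (M : lmod) : Prop := simple_sq M 0 1%:M.

Definition chain (M : lmod) (U V : 'M[F]_(ldim M)) (k : nat)
                 (W : nat -> 'M[F]_(ldim M)) : Prop :=
  [/\ (W 0%N == U)%MS, (W k == V)%MS,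
      forall t, (t <= k)%N -> submod (W t)
    & forall t, (t < k)%N -> (W t <= W t.+1)%MS].

Definition compser (M : lmod) (U V : 'M[F]_(ldim M)) (k : nat)
                   (W : nat -> 'M[F]_(ldim M)) : Prop :=
  chain U V k W /\ forall t, (t < k)%N -> simple_sq M (W t) (W t.+1).

(* [V/U : S] = n, the composition multiplicity of the simple module S in
   the subquotient V/U, computed along some composition series (it is
   independent of the series by Jordan-Hoelder). *)
Definition mult_is (M : lmod) (U V : 'M[F]_(ldim M)) (S : lmod) (n : nat) : Prop :=
  exists k W (T : seq nat),
    [/\ compser U V k W, uniq T, size T = n &
        forall t, t \in T <-> ((t < k)%N /\ sq_iso M (W t) (W t.+1) S 0 1%:M)].

Definition factors_in (M : lmod) (U V : 'M[F]_(ldim M)) (I : Type)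
           (S : I -> lmod) (p : I -> Prop) : Prop :=
  exists k W, compser U V k W /\
    forall t, (t < k)%N -> exists j, p j /\ sq_iso M (W t) (W t.+1) (S j) 0 1%:M.

Definition filtered (M : lmod) (U V : 'M[F]_(ldim M)) (I : Type)
   (N : I -> lmod) (Uj Vj : forall j, 'M[F]_(ldim (N j))) (p : I -> Prop) : Prop :=
  exists k W, chain U V k W /\
    forall t, (t < k)%N -> exists j, p j /\ sq_iso M (W t) (W t.+1) (N j) (Uj j) (Vj j).

Definition projective (M : lmod) : Prop :=
  forall (N N' : lmod) (g : 'M[F]_(ldim N, ldim N')) (f : 'M[F]_(ldim M, ldim N')),
    lmodP N -> lmodP N' -> mhom g -> row_full g -> mhom f ->
    exists h : 'M[F]_(ldim M, ldim N), mhom h /\ h *m g = f.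

Definition injective_mod (M : lmod) : Prop :=
  forall (N' N : lmod) (g : 'M[F]_(ldim N', ldim N)) (f : 'M[F]_(ldim N', ldim M)),
    lmodP N -> lmodP N' -> mhom g -> row_free g -> mhom f ->
    exists h : 'M[F]_(ldim N, ldim M), mhom h /\ g *m h = f.

Definition proj_cover (P S : lmod) : Prop :=
  [/\ lmodP P, projective P &
      exists p : 'M[F]_(ldim P, ldim S), [/\ mhom p, row_full p &
        forall U : 'M[F]_(ldim P), submod U ->
          (1%:M <= U + kermx p)%MS -> ((1%:M : 'M[F]_(ldim P)) <= U)%MS]].

Definition inj_hull (I S : lmod) : Prop :=
  [/\ lmodP I, injective_mod I &
      exists i : 'M[F]_(ldim S, ldim I), [/\ mhom i, row_free i &
        forall U : 'M[F]_(ldim I), submod U ->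
          (U :&: i <= (0 : 'M[F]_(ldim I)))%MS -> (U <= (0 : 'M[F]_(ldim I)))%MS]].

Definition rdim : nat := \dim (fullv : {vspace A}).
Definition rbasis : rdim.-tuple A := vbasis fullv.

(* left regular module A: row i of lact a = coordinates of a * b_i *)
Definition regmod : lmod :=
  @LMod rdim (fun a => \matrix_(i, j) coord rbasis j (a * tnth rbasis i)).

Definition rmulmx (a : A) : 'M[F]_rdim :=
  \matrix_(i, j) coord rbasis j (tnth rbasis i * a).

(* D(A_A) = Hom_F(A, F) as a left module: a row vector phi represents the
   functional x |-> coords(x) *m phi^T, and (a . phi)(x) = phi(x a). *)
Definition dualreg : lmod := @LMod rdim (fun a => (rmulmx a)^T).

Definition AeA (e : A) : {vspace A} := prodv (prodv fullv <[e]>%VS) fullv.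
Definition AeAmx (e : A) : 'M[F]_(\dim (AeA e), rdim) :=
  \matrix_(i, j) coord rbasis j (tnth (vbasis (AeA e)) i).

(* A/AeA as a left A-module = subquotient A / AeA of the regular module *)
Definition quot_lo (e : A) : 'M[F]_rdim := <<AeAmx e>>%MS.
(* D(A/AeA) = functionals vanishing on AeA: a submodule of D(A_A) *)
Definition dquot (e : A) : 'M[F]_rdim := kermx (AeAmx e)^T.

Definition supp (Q : Type) (L : Q -> lmod) (e : A) (i : Q) : Prop :=
  lact (L i) e != 0.

End Modules.

Arguments filtered {F A M} U V {I} N Uj Vj p.
Arguments sq_iso {F A} M U V N U' V'.
Arguments simple_sq {F A} M U V.

Definition rt_closure (Q : Type) (R : Q -> Q -> Prop) : Q -> Q -> Prop :=
  clos_refl_trans Q R.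

Definition coideal (Q : Type) (le : Q -> Q -> Prop) (S : Q -> Prop) : Prop :=
  forall i j, le i j -> S i -> S j.

(* Main.v *)
Require Import Defs.
From HB Require Import structures.
From mathcomp Require Import all_boot all_order all_algebra all_field.
From Stdlib Require Import Relations.
Import GRing.Theory.
Local Open Scope ring_scope.
Set Implicit Arguments.
Unset Strict Implicit.

Section Gen.
Variables (F : fieldType) (A : falgType F).
Implicit Types M N : lmod A.

Lemma lactD M : lmodP M -> forall a b, lact M (a + b) = lact M a + lact M b.
Proof. by case=> H _ _ a b; have := H 1 a b; rewrite !scale1r. Qed.

Lemma lact0 M : lmodP M -> lact M 0 = 0.
Proof.
move=> HM; apply: (addrI (lact M 0)).
by rewrite addr0 -lactD // addr0.
Qed.

Lemma lactZ M : lmodP M -> forall k a, lact M (k *: a) = k *: lact M a.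
Proof. by move=> HM k a; case: (HM) => H _ _; have := H k a 0; rewrite (lact0 HM) !addr0. Qed.

Lemma lactM M : lmodP M -> forall a b, lact M (a * b) = lact M b *m lact M a.
Proof. by case=> _ _. Qed.

Lemma lact1 M : lmodP M -> lact M 1 = 1%:M.
Proof. by case=> _ ->. Qed.

Lemma lact_sum M (HM : lmodP M) I r (P : pred I) (G : I -> A) :
  lact M (\sum_(i <- r | P i) G i) = \sum_(i <- r | P i) lact M (G i).
Proof. exact: (big_morph _ (lactD HM) (lact0 HM)). Qed.

Definition coordrow (x : A) : 'rV[F]_(rdim A) := \row_j coord (rbasis A) j x.

Lemma coord_exp (x : A) :
  x = \sum_(k < rdim A) coord (rbasis A) k x *: tnth (rbasis A) k.
Proof.
rewrite {1}(coord_vbasis (memvf x)); apply: eq_bigr => k _.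
by rewrite (tnth_nth 0).
Qed.

Lemma lact_coord M (HM : lmodP M) (x : A) :
  lact M x = \sum_(k < rdim A) coord (rbasis A) k x *: lact M (tnth (rbasis A) k).
Proof.
rewrite {1}(coord_exp x) lact_sum //; apply: eq_bigr => k _.
by rewrite lactZ.
Qed.

Lemma coordrow_mul n (B : 'M[F]_(rdim A, n)) x :
  coordrow x *m B = \sum_k coord (rbasis A) k x *: row k B.
Proof. by rewrite mulmx_sum_row; apply: eq_bigr => k _; rewrite mxE. Qed.


Lemma span_ann M (HM : lmodP M) (X : seq A) y :
  (forall x, x \in X -> lact M x = 0) -> y \in <<X>>%VS -> lact M y = 0.
Proof.
move=> HX Hy; have := @coord_span _ _ _ (in_tuple X) y Hy => ->.
rewrite lact_sum //; apply: big1 => i _; rewrite lactZ // HX ?scaler0 //.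
exact: mem_nth.
Qed.

Lemma AeA_ann M (HM : lmodP M) (e y : A) :
  lact M e = 0 -> y \in AeA e -> lact M y = 0.
Proof.
move=> He; rewrite /AeA; rewrite unlock => Hy.
apply: (span_ann HM _ Hy) => _ /allpairsP[[u z] /= [Hu Hz ->]].
rewrite lactM //.
suff -> : lact M u = 0 by rewrite mulmx0.
have Hu' := vbasis_mem Hu.
apply: (span_ann HM _ Hu') => _ /allpairsP[[x w] /= [Hx Hw ->]].
have /vlineP[k ->] := vbasis_mem Hw.
by rewrite lactM // lactZ // He scaler0 mul0mx.
Qed.

Lemma AeA_coord (e y : A) : y \in AeA e -> (coordrow y <= AeAmx e)%MS.
Proof.
move=> Hy; apply/submxP.
exists (\row_l coord (vbasis (AeA e)) l y).
apply/rowP => j; rewrite !mxE.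
rewrite {1}(coord_vbasis Hy) linear_sum /=; apply: eq_bigr => l _.
by rewrite linearZ /= !mxE (tnth_nth 0).
Qed.

Lemma AeAmx_rows (e : A) l : row l (AeAmx e) = coordrow (tnth (vbasis (AeA e)) l).
Proof. by apply/rowP => j; rewrite !mxE. Qed.

Lemma mem_AeA_l (e x : A) : e * x \in AeA e.
Proof.
have : (1 * e) * x \in AeA e.
  by apply: memv_mul; [apply: memv_mul; [apply: memvf | apply: memv_line] | apply: memvf].
by rewrite mul1r.
Qed.

Lemma mem_AeA_r (e x : A) : x * e \in AeA e.
Proof.
rewrite -[x * e]mulr1.
by apply: memv_mul; [apply: memv_mul; [apply: memvf | apply: memv_line] | apply: memvf].
Qed.


Lemma sqi_inj M N (U V : 'M[F]_(ldim M)) (U' : 'M[F]_(ldim N)) (f : 'M[F]_(ldim M, ldim N)) :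
  (forall v : 'rV[F]_(ldim M), (v <= V)%MS -> (v *m f <= U')%MS -> (v <= U)%MS) ->
  forall m (X : 'M[F]_(m, ldim M)), (X <= V)%MS -> (X *m f <= U')%MS -> (X <= U)%MS.
Proof.
move=> H m X XV XfU; apply/row_subP => i; apply: H.
  exact: submx_trans (row_sub i X) XV.
by rewrite -row_mul; apply: submx_trans (row_sub i _) XfU.
Qed.

Lemma sqi_hom M N (V : 'M[F]_(ldim M)) (U' : 'M[F]_(ldim N)) (f : 'M[F]_(ldim M, ldim N)) :
  (forall (a : A) (v : 'rV[F]_(ldim M)), (v <= V)%MS ->
          (v *m lact M a *m f - v *m f *m lact N a <= U')%MS) ->
  forall a m (X : 'M[F]_(m, ldim M)), (X <= V)%MS ->
    (X *m lact M a *m f - X *m f *m lact N a <= U')%MS.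
Proof.
move=> H a m X XV; apply/row_subP => i.
rewrite linearB /= !row_mul; apply: H.
exact: submx_trans (row_sub i X) XV.
Qed.

Definition zsq (e : A) M (U V : 'M[F]_(ldim M)) := (V *m lact M e <= U)%MS.

Lemma zsq_sub e M (U V X Y : 'M[F]_(ldim M)) :
  zsq e U V -> (U <= X)%MS -> (Y <= V)%MS -> zsq e X Y.
Proof.
rewrite /zsq => h1 h2 h3; apply: submx_trans h2; apply: submx_trans h1.
exact: submxMr.
Qed.

Lemma zsq_iso e M N (U V : 'M[F]_(ldim M)) (U' V' : 'M[F]_(ldim N)) :
  zsq e U V -> sq_iso M U V N U' V' -> submod U' -> zsq e U' V'.
Proof.
move=> hz [f [hV hU hinj hsurj hhom]] hU'.
rewrite /zsq; apply: submx_trans (submxMr (lact N e) hsurj) _.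
rewrite addsmxMr addsmx_sub hU' andbT.
have h1 := sqi_hom hhom e (submx_refl V).
have h2 : (V *m lact M e *m f <= U')%MS.
  exact: submx_trans (submxMr f hz) hU.
have -> : V *m f *m lact N e =
   V *m lact M e *m f - (V *m lact M e *m f - V *m f *m lact N e).
  by rewrite opprB addrC subrK.
by apply: addmx_sub h2 _; rewrite eqmx_opp.
Qed.

Lemma submod0 M : submod (0 : 'M[F]_(ldim M)).
Proof. by move=> a; rewrite mul0mx sub0mx. Qed.

Lemma chain_bounds M (U V : 'M[F]_(ldim M)) k W :
  chain U V k W -> forall t, (t <= k)%N -> (U <= W t)%MS /\ (W t <= V)%MS.
Proof.
case=> /andP[_ h0] /andP[hk _] _ hinc.
have up : forall s t, (t + s = k)%N -> (W t <= W k)%MS.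
  elim=> [|s IH] t; first by rewrite addn0 => ->.
  move=> hts; apply: submx_trans (IH t.+1 _); last by rewrite addSnnS.
  by apply: hinc; rewrite -hts addnS ltnS leq_addr.
have low : forall t, (t <= k)%N -> (U <= W t)%MS.
  elim=> [|t IH] htk //; apply: submx_trans (IH (ltnW htk)) _.
  exact: hinc.
move=> t htk; split; first exact: low.
apply: submx_trans hk; apply: (up (k - t)%N t); exact: subnKC.
Qed.

Lemma simple_cases M (X : 'M[F]_(ldim M)) :
  simple_mod M -> submod X -> (X == (0 : 'M[F]_(ldim M)))%MS \/ (X == 1%:M)%MS.
Proof. by case=> _ _ _ H hX; apply: H => //; rewrite ?sub0mx ?submx1. Qed.

Lemma simple_nz M : simple_mod M -> (1%:M : 'M[F]_(ldim M)) != 0.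
Proof. by case=> _ _ + _; rewrite lt0mx. Qed.

Lemma img_submod M N (h : 'M[F]_(ldim M, ldim N)) : mhom h -> submod <<h>>%MS.
Proof. by move=> hh a; rewrite (eqmxMr _ (genmxE h)) genmxE -hh submxMl. Qed.

Lemma ker_submod M N (h : 'M[F]_(ldim M, ldim N)) : mhom h -> submod (kermx h).
Proof.
move=> hh a; rewrite sub_kermx -mulmxA hh mulmxA.
by move/sub_kermxP: (submx_refl (kermx h)) => ->; rewrite mul0mx.
Qed.

Lemma cap_submod M (U V : 'M[F]_(ldim M)) : submod U -> submod V -> submod (U :&: V)%MS.
Proof.
move=> hU hV a; rewrite sub_capmx.
by rewrite (submx_trans (submxMr _ (capmxSl U V)) (hU a))
           (submx_trans (submxMr _ (capmxSr U V)) (hV a)).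
Qed.


Definition rsub M m (X : 'M[F]_(m, ldim M)) := forall a, (X *m lact M a <= X)%MS.

Lemma img_rsub M N (h : 'M[F]_(ldim M, ldim N)) : mhom h -> rsub h.
Proof. by move=> hh a; rewrite -hh submxMl. Qed.

Lemma rsubM M N m (X : 'M[F]_(m, ldim M)) (h : 'M[F]_(ldim M, ldim N)) :
  rsub X -> mhom h -> rsub (X *m h).
Proof. by move=> hX hh a; rewrite -mulmxA -hh mulmxA submxMr. Qed.

Lemma cap_rsub M m1 m2 (U : 'M[F]_(m1, ldim M)) (V : 'M[F]_(m2, ldim M)) :
  rsub U -> rsub V -> rsub (U :&: V)%MS.
Proof.
move=> hU hV a; rewrite sub_capmx.
by rewrite (submx_trans (submxMr _ (capmxSl U V)) (hU a))
           (submx_trans (submxMr _ (capmxSr U V)) (hV a)).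
Qed.

Lemma rsub_gen M m (X : 'M[F]_(m, ldim M)) : rsub X -> submod <<X>>%MS.
Proof. by move=> hX a; rewrite (eqmxMr _ (genmxE X)) genmxE. Qed.

Lemma full_img m n p (X : 'M[F]_(m, n)) (h : 'M[F]_(n, p)) :
  (h <= X *m h)%MS -> (1%:M <= X + kermx h)%MS.
Proof.
case/submxP=> D hD.
rewrite -[1%:M](subrK (D *m X)) addsmxC addmx_sub_adds ?submxMl //.
by apply/sub_kermxP; rewrite mulmxBl mul1mx -mulmxA -hD subrr.
Qed.

Lemma mx_nz_full m n (p : 'M[F]_(m, n)) : row_full p -> (1%:M : 'M[F]_n) != 0 -> p != 0.
Proof.
case/row_fullP=> B hB h1; apply/eqP => p0.
by move: h1; rewrite -hB p0 mulmx0 eqxx.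
Qed.

Lemma top_iso (Pm Lm Li : lmod A) (psi : 'M[F]_(ldim Pm, ldim Li)) :
  proj_cover Pm Lm -> simple_mod Li -> simple_mod Lm -> mhom psi -> psi != 0 ->
  miso Lm Li.
Proof.
move=> [_ _ [p [hp pfull psup]]] sLi sLm hpsi psi0.
have psifull : row_full psi.
  case: (simple_cases sLi (rsub_gen (img_rsub hpsi))) => /andP[h1 h2].
    by move: h1; rewrite genmxE submx0 (negbTE psi0).
  by rewrite -sub1mx; rewrite genmxE in h2.
have stepA : (kermx psi <= kermx p)%MS.
  have hX := rsub_gen (rsubM (ker_submod hpsi) hp).
  case: (simple_cases sLm hX) => /andP[h1 h2].
    by apply/sub_kermxP/eqP; rewrite -submx0 -genmxE.
  rewrite genmxE in h2.
  have := full_img (submx_trans (submx1 p) h2).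
  move/(psup _ (ker_submod hpsi)) => /sub_kermxP; rewrite mul1mx => ps0.
  by rewrite ps0 eqxx in psi0.
have stepB : (kermx p <= kermx psi)%MS.
  have hX := rsub_gen (rsubM (ker_submod hp) hpsi).
  case: (simple_cases sLi hX) => /andP[h1 h2].
    by apply/sub_kermxP/eqP; rewrite -submx0 -genmxE.
  rewrite genmxE in h2.
  have := full_img (submx_trans (submx1 psi) h2).
  rewrite (addsmx_idPl stepA) => /sub_kermxP; rewrite mul1mx => p0.
  by have := mx_nz_full pfull (simple_nz sLm); rewrite p0 eqxx.
have pp : pinvmx p *m p = 1%:M.
  by have := mulmxKpV (submx_full 1%:M pfull); rewrite mul1mx.
set h := pinvmx p *m psi.
have psi_eq : p *m h = psi.
  have : (1%:M - p *m pinvmx p) *m p = 0.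
    by rewrite mulmxBl mul1mx -mulmxA pp mulmx1 subrr.
  move/sub_kermxP => hk; have := submx_trans hk stepB => /sub_kermxP.
  rewrite mulmxBl mul1mx => /eqP; rewrite subr_eq0 => /eqP ->.
  by rewrite /h mulmxA.
have canc : forall Y Z : 'M[F]_(ldim Lm, ldim Li), p *m Y = p *m Z -> Y = Z.
  by move=> Y Z hYZ; rewrite -[Y]mul1mx -[Z]mul1mx -pp -!mulmxA hYZ.
exists h; split.
- exact: submx1.
- by rewrite mul0mx sub0mx.
- move=> v _; rewrite submx0 => /eqP vh0.
  have : (v *m pinvmx p <= kermx psi)%MS.
    by apply/sub_kermxP; rewrite -mulmxA.
  move/(fun H => submx_trans H stepA)/sub_kermxP; rewrite -mulmxA pp mulmx1 => ->.
  exact: sub0mx.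
- apply: submx_trans (addsmxSl _ _); rewrite mul1mx.
  by apply: submx_trans (_ : 1%:M <= psi)%MS _; [rewrite sub1mx | rewrite -psi_eq submxMl].
- move=> a v _.
  have comm : lact Lm a *m h = h *m lact Li a.
    apply: canc; rewrite mulmxA -hp -mulmxA psi_eq hpsi -psi_eq.
    by rewrite mulmxA.
  by rewrite -mulmxA comm mulmxA subrr sub0mx.
Qed.


Lemma sub_simple S N (h : 'M[F]_(ldim S, ldim N)) m (X : 'M[F]_(m, ldim N)) :
  simple_mod S -> row_free h -> mhom h -> rsub X -> (X <= h)%MS ->
  X = 0 \/ (h <= X)%MS.
Proof.
move=> sS hfree hh hX Xh.
set Y := X *m pinvmx h.
have YX : Y *m h = X by rewrite /Y mulmxKpV.
have hY : rsub Y.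
  move=> a; have : (Y *m lact S a *m h <= Y *m h)%MS.
    by rewrite -mulmxA hh mulmxA YX; apply: hX.
  by move/(submxMr (pinvmx h)); rewrite !mulmxKp.
case: (simple_cases sS (rsub_gen hY)) => /andP[h1 h2].
  by left; move: h1; rewrite genmxE submx0 => /eqP Y0; rewrite -YX Y0 mul0mx.
right; rewrite genmxE in h2.
by rewrite -YX; move/(submxMr h): h2; rewrite mul1mx.
Qed.

Lemma soc_iso (Im Lm Li : lmod A) (psi : 'M[F]_(ldim Li, ldim Im)) :
  inj_hull Im Lm -> simple_mod Li -> simple_mod Lm -> mhom psi -> psi != 0 ->
  miso Li Lm.
Proof.
move=> [_ _ [io [hio iofree iess]]] sLi sLm hpsi psi0.
have psifree : row_free psi.
  case: (simple_cases sLi (ker_submod hpsi)) => /andP[h1 h2].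
    by rewrite -kermx_eq0 -submx0.
  by move/sub_kermxP: h2; rewrite mul1mx => ps0; rewrite ps0 eqxx in psi0.
set Z := (<<psi>> :&: io)%MS.
have hZ : rsub Z by apply: cap_rsub; [apply: rsub_gen; apply: img_rsub | apply: img_rsub].
have Z0 : Z != 0.
  apply/negP; rewrite -submx0 => /(iess _ (rsub_gen (img_rsub hpsi))).
  by rewrite genmxE submx0 (negbTE psi0).
have Zpsi : (Z <= psi)%MS by apply: submx_trans (capmxSl _ _) _; rewrite genmxE.
have Zio : (Z <= io)%MS by rewrite /Z capmxSr.
have psi_io : (psi <= io)%MS.
  case: (sub_simple sLi psifree hpsi hZ Zpsi) => [Z0'|]; first by rewrite Z0' eqxx in Z0.
  by move/submx_trans; apply.
have io_psi : (io <= psi)%MS.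
  case: (sub_simple sLm iofree hio hZ Zio) => [Z0'|]; first by rewrite Z0' eqxx in Z0.
  by move/submx_trans; apply.
set h := psi *m pinvmx io.
have hio_eq : h *m io = psi by rewrite /h mulmxKpV.
have canc : forall k (Y W : 'M[F]_(k, ldim Lm)), Y *m io = W *m io -> Y = W.
  by move=> k Y W hYW; rewrite -(mulmxKp iofree Y) hYW mulmxKp.
exists h; split.
- exact: submx1.
- by rewrite mul0mx sub0mx.
- move=> v _; rewrite submx0 => /eqP vh0.
  have : v *m psi = 0 by rewrite -hio_eq mulmxA vh0 mul0mx.
  by move/eqP; rewrite mulmx_free_eq0 // => /eqP ->; rewrite sub0mx.
- apply: submx_trans (addsmxSl _ _); rewrite mul1mx.
  set X := io *m pinvmx psi.
  have Xpsi : X *m psi = io by rewrite /X mulmxKpV.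
  have : X *m h = 1%:M.
    by apply: canc; rewrite -mulmxA hio_eq Xpsi mul1mx.
  by move=> <-; rewrite submxMl.
- move=> a v _.
  have comm : lact Li a *m h = h *m lact Lm a.
    apply: canc; rewrite -mulmxA hio_eq hpsi -hio_eq -!mulmxA hio.
    by [].
  by rewrite -mulmxA comm mulmxA subrr sub0mx.
Qed.


Lemma modtrans m n o (X Y Z : 'M[F]_(m, n)) (U : 'M[F]_(o, n)) :
  (X - Y <= U)%MS -> (Y - Z <= U)%MS -> (X - Z <= U)%MS.
Proof.
move=> h1 h2; have -> : X - Z = (X - Y) + (Y - Z) by rewrite addrA subrK.
exact: addmx_sub.
Qed.

Lemma modsym m n o (X Y : 'M[F]_(m, n)) (U : 'M[F]_(o, n)) :
  (X - Y <= U)%MS -> (Y - X <= U)%MS.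
Proof. by rewrite -opprB eqmx_opp. Qed.

Lemma back_hom M N Li (U V : 'M[F]_(ldim M)) (U' : 'M[F]_(ldim N))
    (f : 'M[F]_(ldim M, ldim N)) (phi : 'M[F]_(ldim M, ldim Li)) :
  submod V -> submod U' ->
  (forall v : 'rV[F]_(ldim M), (v <= V)%MS -> (v *m f <= U')%MS -> (v <= U)%MS) ->
  (1%:M <= V *m f + U')%MS ->
  (forall (a : A) (v : 'rV[F]_(ldim M)), (v <= V)%MS ->
          (v *m lact M a *m f - v *m f *m lact N a <= U')%MS) ->
  mhom phi -> U *m phi = 0 -> V *m phi != 0 ->
  exists psi : 'M[F]_(ldim N, ldim Li), mhom psi /\ psi != 0.
Proof.
move=> hV hU' hinj hsurj hhom hphi Uphi0 Vphi.
rewrite addsmxE in hsurj.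
set B := col_mx (V *m f) U'.
set C := pinvmx B.
set g := lsubmx C *m V.
have key : forall m (X : 'M[F]_(m, ldim N)), (X *m g *m f - X <= U')%MS.
  move=> m X; have XB : (X <= B)%MS by apply: submx_trans (submx1 X) hsurj.
  have := mulmxKpV XB; rewrite -/C -[C in X *m C](hsubmxK C) mul_mx_row mul_row_col.
  move=> E; rewrite -{2}E /g !mulmxA opprD addrA subrr add0r eqmx_opp.
  exact: submxMl.
have gV : (g <= V)%MS by rewrite submxMl.
have Uphi : forall m (X : 'M[F]_(m, ldim M)), (X <= U)%MS -> X *m phi = 0.
  by move=> m X /submxP[D ->]; rewrite -mulmxA Uphi0 mulmx0.
exists (g *m phi); split.
- move=> a.
  set D := lact N a *m g - g *m lact M a.
  have DV : (D <= V)%MS.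
    apply: addmx_sub; first exact: submx_trans (submxMl _ _) gV.
    by rewrite eqmx_opp; apply: submx_trans (submxMr _ gV) (hV a).
  have E1 : (g *m f - 1%:M <= U')%MS by have := key _ 1%:M; rewrite mul1mx.
  have DfU : (D *m f <= U')%MS.
    rewrite /D mulmxBl.
    apply: (@modtrans _ _ _ _ (lact N a) _).
      by rewrite -mulmxA -{2}[lact N a]mulmx1 -mulmxBr; apply: mulmx_sub.
    apply: (@modtrans _ _ _ _ (g *m f *m lact N a) _).
      rewrite -{1}[lact N a]mul1mx -mulmxBl.
      exact: submx_trans (submxMr _ (modsym E1)) (hU' a).
    exact: modsym (sqi_hom hhom a gV).
  have DU := sqi_inj hinj DV DfU.
  have := Uphi _ _ DU; rewrite /D mulmxBl => /eqP; rewrite subr_eq0 => /eqP e1.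
  by rewrite mulmxA e1 -!mulmxA hphi.
- apply/negP => /eqP psi0.
  set Y := V *m f *m g - V.
  have YV : (Y <= V)%MS.
    by apply: addmx_sub; [exact: submx_trans (submxMl _ _) gV | rewrite eqmx_opp].
  have YfU : (Y *m f <= U')%MS by rewrite /Y mulmxBl; apply: key.
  have := Uphi _ _ (sqi_inj hinj YV YfU); rewrite /Y mulmxBl -[V *m f *m g *m phi]mulmxA psi0 mulmx0 sub0r.
  by move/eqP; rewrite oppr_eq0 (negbTE Vphi).
Qed.


Lemma simple_pos M : simple_mod M -> (0 < ldim M)%N.
Proof.
move/simple_nz; rewrite -mxrank_eq0 mxrank1 lt0n; exact.
Qed.

Lemma regmod_row a kk :
  row kk (lact (regmod A) a) = coordrow (a * tnth (rbasis A) kk).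
Proof. by apply/rowP => j; rewrite !mxE. Qed.

Lemma find_delta (Q : Type) (L P : Q -> lmod A) (K : forall j, 'M[F]_(ldim (P j)))
  (HP : forall j, proj_cover (P j) (L j)) (HLs : forall j, simple_mod (L j))
  (HKsub : forall j, submod (K j)) (e : A) (Li : lmod A) (HLi : lmodP Li)
  (sLi : simple_mod Li) (hz : lact Li e = 0) k W :
  chain (M := regmod A) (quot_lo e) 1%:M k W ->
  (forall t, (t < k)%N -> exists j, sq_iso (regmod A) (W t) (W t.+1) (P j) (K j) 1%:M) ->
  exists t j, [/\ (t < k)%N, sq_iso (regmod A) (W t) (W t.+1) (P j) (K j) 1%:M
                & miso (L j) Li].
Proof.
move=> Hch Hst.
set r0 := Ordinal (simple_pos sLi).
set v0 := row r0 (1%:M : 'M[F]_(ldim Li)).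
have v0nz : v0 != 0.
  apply/eqP => /rowP /(_ r0); rewrite !mxE eqxx /=; apply/eqP; exact: oner_neq0.
set phi := \matrix_(kk < rdim A) (v0 *m lact Li (tnth (rbasis A) kk)).
have phi_coord : forall x, coordrow x *m phi = v0 *m lact Li x.
  move=> x; rewrite coordrow_mul (lact_coord HLi x) mulmx_sumr.
  by apply: eq_bigr => kk _; rewrite rowK scalemxAr.
have hphi : mhom (M := regmod A) (N := Li) phi.
  move=> a; apply/row_matrixP => kk; rewrite !row_mul regmod_row phi_coord rowK.
  by rewrite lactM // mulmxA.
have AeAphi : AeAmx e *m phi = 0.
  apply/row_matrixP => l; rewrite row_mul AeAmx_rows phi_coord row0.
  by rewrite (AeA_ann HLi hz (vbasis_mem (mem_tnth _ _))) mulmx0.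
have phinz : phi != 0.
  apply/eqP => phi0; move: (phi_coord 1); rewrite phi0 mulmx0 lact1 // mulmx1.
  by move/esym/eqP; rewrite (negbTE v0nz).
have [[/andP[h0 _] /andP[_ hk] hsub _] _] : chain (M := regmod A) (quot_lo e) 1%:M k W /\ True by [].
have W0phi : W 0%N *m phi = 0.
  have : (W 0%N <= AeAmx e)%MS by apply: submx_trans h0 _; rewrite genmxE.
  by case/submxP => D ->; rewrite -mulmxA AeAphi mulmx0.
have Wkphi : W k *m phi != 0.
  apply/eqP => Wk0; move/submxP: hk => [D hD].
  by move: phinz; rewrite -[phi]mul1mx hD -mulmxA Wk0 mulmx0 eqxx.
have ex : exists n, W n *m phi != 0 by exists k.
case: (ex_minnP ex) => [[|t] pt mint]; first by rewrite W0phi eqxx in pt.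
have tk : (t < k)%N by apply: mint.
have Wt0 : W t *m phi = 0.
  by apply/eqP; apply: contraT => h; have := mint t h; rewrite ltnn.
have [j [f [hV hU hinj hsurj hhom]]] := Hst t tk.
have [psi [hpsi psinz]] :=
  back_hom (hsub t.+1 tk) (HKsub j) hinj hsurj hhom hphi Wt0 pt.
exists t, j; split => //; first by exists f.
exact: top_iso (HP j) sLi (HLs j) hpsi psinz.
Qed.


Lemma lact_entry M (HM : lmodP M) (x : A) r c :
  lact M x r c = \sum_kk coord (rbasis A) kk x * lact M (tnth (rbasis A) kk) r c.
Proof. by rewrite {1}(lact_coord HM x) summxE; apply: eq_bigr => kk _; rewrite mxE. Qed.

Lemma find_nabla (Q : Type) (L I : Q -> lmod A) (Nb : forall j, 'M[F]_(ldim (I j)))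
  (HI : forall j, inj_hull (I j) (L j)) (HLs : forall j, simple_mod (L j))
  (e : A) (Li : lmod A) (HLi : lmodP Li)
  (sLi : simple_mod Li) (hz : lact Li e = 0) k W :
  chain (M := dualreg A) 0 (dquot e) k W ->
  (forall t, (t < k)%N -> exists j, sq_iso (dualreg A) (W t) (W t.+1) (I j) 0 (Nb j)) ->
  exists t j, [/\ (t < k)%N, sq_iso (dualreg A) (W t) (W t.+1) (I j) 0 (Nb j)
                & miso Li (L j)].
Proof.
move=> Hch Hst.
set r0 := Ordinal (simple_pos sLi).
set phi := \matrix_(r, kk) lact Li (tnth (rbasis A) kk) r r0 : 'M[F]_(ldim Li, rdim A).
have hphi : mhom (M := Li) (N := dualreg A) phi.
  move=> a; apply/matrixP => r kk.
  transitivity ((lact Li (tnth (rbasis A) kk * a)) r r0).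
    by rewrite lactM // !mxE; apply: eq_bigr => s _; rewrite mxE.
  rewrite /= mxE lact_entry //; apply: eq_bigr => l _; rewrite !mxE mulrC.
  by [].
have phiq : (phi <= dquot e)%MS.
  rewrite /dquot sub_kermx; apply/eqP/matrixP => r l.
  have := lact_entry HLi (tnth (vbasis (AeA e)) l) r r0.
  rewrite (AeA_ann HLi hz (vbasis_mem (mem_tnth _ _))) !mxE => H.
  apply: (etrans _ (esym H)).
  by apply: eq_bigr => kk _; rewrite !mxE mulrC.
have phinz : phi != 0.
  apply/eqP => phi0; have := lact_entry HLi 1 r0 r0.
  rewrite lact1 // mxE eqxx /= big1 => [|kk _].
    by move/eqP; rewrite oner_eq0.
  by have := congr1 (fun X : 'M[F]_(_, _) => X r0 kk) phi0; rewrite !mxE => ->; rewrite mulr0.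
case: (Hch) => /andP[h0 _] /andP[_ hk] hsub _.
have phik : (phi <= W k)%MS by apply: submx_trans phiq hk.
have ex : exists n, (phi <= W n)%MS by exists k.
case: (ex_minnP ex) => [[|t] pt mint].
  by move: phinz; move: (submx_trans pt h0); rewrite submx0 => ->.
have tk : (t < k)%N by apply: mint.
have Wt : ~~ (phi <= W t)%MS.
  by apply/negP => h; have := mint t h; rewrite ltnn.
have [j [f [hV hU hinj hsurj hhom]]] := Hst t tk.
have hpsi : mhom (M := Li) (N := I j) (phi *m f).
  move=> a; rewrite mulmxA hphi.
  have := sqi_hom hhom a pt; rewrite submx0 subr_eq0 => /eqP ->.
  by [].
have psinz : phi *m f != 0.
  apply/eqP => pf0; move: Wt; rewrite (sqi_inj hinj pt) //.
  by rewrite pf0 sub0mx.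
exists t, j; split => //; first by exists f.
exact: soc_iso (HI j) sLi (HLs j) hpsi psinz.
Qed.


Lemma zsq_reg (e : A) : zsq e (M := regmod A) (quot_lo e) 1%:M.
Proof.
rewrite /zsq mul1mx genmxE; apply/row_subP => kk; rewrite regmod_row.
exact/AeA_coord/mem_AeA_l.
Qed.

Lemma zsq_dual (e : A) : zsq e (M := dualreg A) 0 (dquot e).
Proof.
have : (rmulmx e <= AeAmx e)%MS.
  apply/row_subP => kk.
  have -> : row kk (rmulmx e) = coordrow (tnth (rbasis A) kk * e).
    by apply/rowP => j; rewrite !mxE.
  exact/AeA_coord/mem_AeA_r.
case/submxP => D hD; rewrite /zsq /= hD trmx_mul mulmxA /dquot mulmx_ker mul0mx.
exact: sub0mx.
Qed.

Lemma zsq_simple (e : A) M : zsq e (M := M) 0 1%:M -> lact M e = 0.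
Proof. by rewrite /zsq mul1mx submx0 => /eqP. Qed.

End Gen.

Unset Implicit Arguments.
Set Strict Implicit.

Theorem lemma3p16
  (F : fieldType) (A : falgType F)
  (d : Order.disp_t) (Q : finPOrderType d)
  (* simple modules L_i, labelled by Q *)
  (L : Q -> lmod A)
  (HLmod : forall i, lmodP (L i))
  (HLsimple : forall i, simple_mod (L i))
  (HLdistinct : forall i j, miso (L i) (L j) -> i = j)
  (HLall : forall S : lmod A, lmodP S -> simple_mod S -> exists i, miso S (L i))
  (* projective covers P_i and the kernels K_i of P_i -> Delta_i *)
  (P : Q -> lmod A) (HP : forall i, proj_cover (P i) (L i))
  (K : forall i, 'M[F]_(ldim (P i)))
  (HKsub : forall i, submod (K i))
  (HKfac : forall i, factors_in (K i) 1%:M L (fun j => (j <= i)%O))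
  (HKmin : forall i (U : 'M[F]_(ldim (P i))), submod U ->
             factors_in U 1%:M L (fun j => (j <= i)%O) -> (K i <= U)%MS)
  (* injective hulls I_i, costandard N_i = nabla_i, proper costandard Nb_i *)
  (I : Q -> lmod A) (HI : forall i, inj_hull (I i) (L i))
  (N Nb : forall i, 'M[F]_(ldim (I i)))
  (HNsub : forall i, submod (N i))
  (HNfac : forall i, factors_in 0 (N i) L (fun j => (j <= i)%O))
  (HNmax : forall i (U : 'M[F]_(ldim (I i))), submod U ->
             factors_in 0 U L (fun j => (j <= i)%O) -> (U <= N i)%MS)
  (HNbsub : forall i, submod (Nb i))
  (HNbN : forall i, (Nb i <= N i)%MS)
  (HNbmult : forall i, mult_is 0 (Nb i) (L i) 1)
  (HNbmax : forall i (U : 'M[F]_(ldim (I i))), submod U -> (U <= N i)%MS ->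
             mult_is 0 U (L i) 1 -> (U <= Nb i)%MS)
  (* A is left standardly stratified *)
  (Hstrat : forall i, filtered (M := P i) 0 (K i) P K (fun j => 1%:M)
                        (fun j => (i < j)%O))
  (* the idempotent e; its support is Q0' *)
  (e : A) (He : e * e = e)
  (* A/AeA has a Delta-filtration *)
  (HDelta : filtered (M := regmod A) (quot_lo e) 1%:M P K (fun j => 1%:M)
              (fun _ => True))
  (* D(A/AeA) has a proper-costandard filtration *)
  (HNabla : filtered (M := dualreg A) 0 (dquot e) I (fun j => 0) Nb
              (fun _ => True)) :
  coideal
    (rt_closure (fun j i : Q =>
       (exists n, n <> 0%N /\ mult_is (K i) 1%:M (L j) n) \/
       (exists n, n <> 0%N /\ mult_is 0 (Nb i) (L j) n)))
    (supp L e).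
Proof.
rewrite /coideal /rt_closure => x y; elim=> {x y} [j i Rji | x | x y z _ IH1 _ IH2];
  [| done | by move=> /IH1 /IH2].
rewrite /supp; apply: contraNN => /eqP hz; apply/eqP.
case: Rji => [[n [n0 Hm]] | [n [n0 Hm]]].
- have [k [W [Hch Hst]]] := HDelta.
  have Hst' : forall t, (t < k)%N -> exists j,
      sq_iso (regmod A) (W t) (W t.+1) (P j) (K j) 1%:M.
    by move=> t /Hst [j' [_ h]]; exists j'.
  have [t [j' [tk hiso hmiso]]] :=
    find_delta HP HLsimple HKsub (HLmod i) (HLsimple i) hz Hch Hst'.
  have ej := HLdistinct _ _ hmiso; subst j'.
  have z1 : zsq e (W t) (W t.+1).
    exact: zsq_sub (zsq_reg e) (proj1 (chain_bounds Hch (ltnW tk))) (submx1 _).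
  have z2 := zsq_iso z1 hiso (HKsub i).
  case: Hm => k2 [W2 [T [[Hch2 _] _ hsz HT]]].
  case: T hsz HT => [|t2 T'] hsz HT; first by move: n0; rewrite -hsz.
  have [t2k hiso2] := (HT t2).1 (mem_head _ _).
  have z3 : zsq e (W2 t2) (W2 t2.+1).
    exact: zsq_sub z2 (proj1 (chain_bounds Hch2 (ltnW t2k))) (submx1 _).
  exact: zsq_simple (zsq_iso z3 hiso2 (submod0 _)).
- have [k [W [Hch Hst]]] := HNabla.
  have Hst' : forall t, (t < k)%N -> exists j,
      sq_iso (dualreg A) (W t) (W t.+1) (I j) 0 (Nb j).
    by move=> t /Hst [j' [_ h]]; exists j'.
  have [t [j' [tk hiso hmiso]]] :=
    find_nabla HI HLsimple (HLmod i) (HLsimple i) hz Hch Hst'.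
  have ej := HLdistinct _ _ hmiso; subst j'.
  have z1 : zsq e (W t) (W t.+1).
    exact: zsq_sub (zsq_dual e) (sub0mx _ _) (proj2 (chain_bounds Hch tk)).
  have z2 := zsq_iso z1 hiso (submod0 _).
  case: Hm => k2 [W2 [T [[Hch2 _] _ hsz HT]]].
  case: T hsz HT => [|t2 T'] hsz HT; first by move: n0; rewrite -hsz.
  have [t2k hiso2] := (HT t2).1 (mem_head _ _).
  have z3 : zsq e (W2 t2) (W2 t2.+1).
    exact: zsq_sub z2 (sub0mx _ _) (proj2 (chain_bounds Hch2 t2k)).
  exact: zsq_simple (zsq_iso z3 hiso2 (submod0 _)).
Qed.
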